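(* Let $\mathcal{P}_1,\dots,\mathcal{P}_k$ be finite posets with $p_j=|\mathcal{P}_j|$ and $r\ge1$. The set $\mathcal{N}_{\le r}$ is closed. Equivalently, for any $\mathbf{T}\in\mathbb{R}^{p_1\times\cdots\times p_k}$ the infimum $\inf_{\boldsymbol\theta\in\mathcal{N}_{\le r}}\Vert\mathbf{T}-\boldsymbol\theta\Vert_F$ is attained by some $\boldsymbol\theta\in\mathcal{N}_{\le r}$.
   Context: For a finite poset $\mathcal{Q}$, the order cone $\mathcal{C}(\mathcal{Q})$ is the set of $\mathbf{f}\in\mathbb{R}^{\mathcal{Q}}$ with $f_x\ge0$ for all $x$ and $f_x\le f_y$ whenever $x\preceq y$. $\mathcal{N}_{\le r}$ is the set of tensors in $\mathbb{R}^{\mathcal{P}_1\times\cdots\times\mathcal{P}_k}\cong\mathbb{R}^{p_1\times\cdots\times p_k}$ of the form $\sum_{i=1}^r\otimes_{j=1}^k\mathbf{v}^{(ij)}$ with $\mathbf{v}^{(ij)}\in\mathcal{C}(\mathcal{P}_j)$. $\Vert\cdot\Vert_F$ is the Frobenius norm, $\Vert\mathbf{T}\Vert_F^2=\sum_{i_1,\dots,i_k}T_{i_1\dots i_k}^2$. *)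

(* Defs.v *)
From HB Require Import structures.
From mathcomp Require Import all_boot all_order all_algebra.
From mathcomp Require Import all_classical all_reals all_analysis.
Set Implicit Arguments. Unset Strict Implicit. Unset Printing Implicit Defensive.
Import Order.TTheory GRing.Theory Num.Theory.
Local Open Scope ring_scope.

Definition tindex (k : nat) (d : 'I_k -> Order.disp_t)
  (P : forall j : 'I_k, finPOrderType (d j)) : finType :=
  {dffun forall j : 'I_k, P j}.

Definition order_cone (R : realType) (d : Order.disp_t) (Q : finPOrderType d)
  (f : Q -> R) : Prop :=
  (forall x, 0 <= f x) /\ (forall x y : Q, (x <= y)%O -> f x <= f y).

Definition Nle (R : realType) (k : nat) (d : 'I_k -> Order.disp_t)
  (P : forall j : 'I_k, finPOrderType (d j)) (r : nat) : set (tindex P -> R) :=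
  [set theta | exists v : 'I_r -> forall j : 'I_k, P j -> R,
      (forall i j, order_cone (v i j)) /\
      theta = fun x : tindex P => \sum_(i < r) \prod_(j < k) v i j (x j)].

Arguments Nle {R k d} P r _.
Arguments tindex {k d} P.

Definition frob (R : realType) (I : finType) (T : I -> R) : R :=
  Num.sqrt (\sum_(x : I) T x ^+ 2).

(* Main.v *)
Require Import Defs.
From HB Require Import structures.
From mathcomp Require Import all_boot all_order all_algebra.
From mathcomp Require Import all_classical all_reals all_analysis.
Import Order.TTheory GRing.Theory Num.Theory.
Import numFieldNormedType.Exports.
Local Open Scope ring_scope.
Local Open Scope classical_set_scope.
Section S.
Variables (R : realType) (k : nat) (d : 'I_k -> Order.disp_t)
  (P : forall j : 'I_k, finPOrderType (d j)) (r : nat).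

Definition PI := ('I_r * {j : 'I_k & P j})%type.
Definition X := {ptws PI -> R}.
Definition Fm (w : X) : tindex P -> R :=
  fun x => \sum_(i < r) \prod_(j < k) w (i, Tagged (fun j => P j) (x j)).

Lemma Fm_cont (x : tindex P) : continuous (fun w : X => Fm w x).
Proof.
rewrite /Fm.
apply: (@continuous_big R _ +%R 0 xpredT); first exact: add_continuous.
move=> i _.
apply: (@continuous_big R _ *%R 1 xpredT); first exact: mul_continuous.
move=> j _.
exact: (@proj_continuous PI (fun _ => R)).
Qed.

Lemma frob_cont (Y : topologicalType) (I : finType) (G : Y -> I -> R) :
  (forall x, continuous (fun y => G y x)) -> continuous (fun y => frob (G y)).
Proof.
move=> hG y; rewrite /frob.
apply: continuous_comp; last exact: sqrt_continuous.
apply: (@continuous_big R _ +%R 0 xpredT); first exact: add_continuous.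
move=> x _ z.
have -> : (fun y => G y x ^+ 2) = (fun y => G y x) \* (fun y => G y x) by apply/funext=> ?; rewrite /= expr2.
by apply: continuousM; apply: hG.
Qed.
Lemma closed_leset (Y : topologicalType) (A : Type) (Q : A -> Prop) (f g : A -> Y -> R) :
  (forall a, continuous (f a)) -> (forall a, continuous (g a)) ->
  closed [set y | forall a, Q a -> f a y <= g a y].
Proof.
move=> cf cg.
have -> : [set y | forall a, Q a -> f a y <= g a y] =
   \bigcap_(a in Q) ((fun y => g a y - f a y) @^-1` [set z : R | 0 <= z]).
  apply/seteqP; split => y /= H a Qa; first by rewrite /= subr_ge0; apply: H.
  by have := H a Qa; rewrite /= subr_ge0.
apply: closed_bigI => a _; apply: preimage_closed; last exact: closed_ge.
by move=> y _; apply: continuousB; [apply: cg|apply: cf].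
Qed.

Definition Box (B : R) : set X := [set w : X | forall s, `[0, B]%classic (w s)].
Definition Mono : set X := [set w : X | forall a : ('I_r * {j : 'I_k & (P j * P j)%type}),
   ((tagged a.2).1 <= (tagged a.2).2)%O ->
   w (a.1, Tagged (fun j => P j) (tagged a.2).1) <= w (a.1, Tagged (fun j => P j) (tagged a.2).2)].

Lemma Box_compact B : compact (Box B).
Proof.
rewrite /Box.
have := @tychonoff PI (fun _ => R) (fun _ => `[0, B]%classic) (fun _ => @segment_compact R 0 B).
exact.
Qed.

Lemma Mono_closed : closed Mono.
Proof.
apply: (@closed_leset X _ (fun a : ('I_r * {j : 'I_k & (P j * P j)%type}) => ((tagged a.2).1 <= (tagged a.2).2)%O)
  (fun a w => w (a.1, Tagged (fun j => P j) (tagged a.2).1))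
  (fun a w => w (a.1, Tagged (fun j => P j) (tagged a.2).2))) => a.
  exact: (@proj_continuous PI (fun _ => R)).
exact: (@proj_continuous PI (fun _ => R)).
Qed.

Lemma K_compact B : compact (Box B `&` Mono).
Proof. apply: compact_closedI; [exact: Box_compact|exact: Mono_closed]. Qed.
Lemma max_attained (T : finType) (f : T -> R) : (forall y, 0 <= f y) ->
  \big[Order.max/0]_(y : T) f y != 0 -> {y | \big[Order.max/0]_(y : T) f y = f y}.
Proof.
move=> f0 hm; case: (pickP (fun _ : T => true)) => [y _ | none].
  have [z _ ->] := @eq_bigmax _ _ T 0 y xpredT f isT (fun i _ => f0 i).
  by exists z.
exfalso; move: hm; rewrite big_pred0 ?eqxx // => y; exact: none.
Qed.

Lemma in_Nle (w : X) : (forall s, 0 <= w s) -> Mono w -> Nle P r (Fm w).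
Proof.
move=> w0 wm.
exists (fun i j (y : P j) => w (i, Tagged (fun j => P j) y)); split => //.
move=> i j; split => // x y xy.
exact: (wm (i, Tagged (fun j => (P j * P j)%type) (x, y))).
Qed.
Lemma normalize (M : R) (v : 'I_r -> forall j : 'I_k, P j -> R) :
  0 <= M -> (forall i j, order_cone (v i j)) ->
  (forall x : tindex P, \sum_(i < r) \prod_(j < k) v i j (x j) <= M) ->
  exists w : X, (Box (M + 1) `&` Mono) w /\
     Fm w = (fun x : tindex P => \sum_(i < r) \prod_(j < k) v i j (x j)).
Proof.
move=> M0 vc hM.
have v0 i j y : 0 <= v i j y by case: (vc i j).
case: (posnP k) => [k0 | kpos].
  exists (fun _ => 0); split.
    split; first by move=> s /=; rewrite in_itv /= lexx addr_ge0.
    by move=> a _.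
  apply/funext => x; rewrite /Fm; apply: eq_bigr => i _.
  rewrite big1; last by move=> j _; exfalso; case: j => m; rewrite k0.
  by rewrite big1 // => j _; exfalso; case: j => m; rewrite k0.
pose j0 : 'I_k := Ordinal kpos.
pose m i j := \big[Order.max/0]_(y : P j) v i j y.
pose c i := \prod_(j < k) m i j.
pose sc i j := if c i == 0 then 0 else (m i j)^-1 * (if j == j0 then c i else 1).
have m0 i j : 0 <= m i j by apply: bigmax_ge_id.
have vm i j y : v i j y <= m i j by apply: le_bigmax.
have c0 i : 0 <= c i by apply: prodr_ge0.
have sc0 i j : 0 <= sc i j.
  rewrite /sc; case: ifP => // _; apply: mulr_ge0; first by rewrite invr_ge0.
  by case: ifP.
have cM i : c i != 0 -> c i <= M.
  move=> ci.
  have mn j : m i j != 0 by move/prodf_neq0: ci; apply.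
  have H j : {y | m i j = v i j y} by exact: (@max_attained _ _ (v0 i j) (mn j)).
  pose a : tindex P := finfun (fun j => sval (H j)).
  apply: le_trans (hM a).
  rewrite (bigD1 i) //= -[c i]addr0; apply: lerD; last by apply: sumr_ge0 => *; apply: prodr_ge0.
  rewrite le_eqVlt; apply/orP; left; apply/eqP; apply: eq_bigr => j _.
  by rewrite /a ffunE; case: (H j).
exists (fun s : PI => v s.1 (tag s.2) (tagged s.2) * sc s.1 (tag s.2)); split.
  split.
    move=> [i [j y]] /=; rewrite in_itv /=; apply/andP; split; first by apply: mulr_ge0.
    rewrite /sc; case: ifP => [_|cn]; first by rewrite mulr0 addr_ge0.
    rewrite mulrA -[_ + 1]mul1r; apply: ler_pM.
    - by apply: mulr_ge0 => //; rewrite invr_ge0.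
    - by case: ifP.
    - have mp : 0 < m i j.
        rewrite lt_def m0 andbT; apply/negP => /eqP mj.
        by move/negbT/prodf_neq0: cn => /(_ j isT); rewrite mj eqxx.
      by rewrite ler_pdivrMr // mul1r.
    - case: ifP => _; last by rewrite lerDr.
      by apply: le_trans (cM i (negbT cn)) _; rewrite lerDl.
  move=> [i [j [x y]]] /= xy; apply: ler_wpM2r => //.
  by case: (vc i j) => _; apply.
apply/funext => x; rewrite /Fm; apply: eq_bigr => i _ /=.
rewrite big_split /=.
have [ci|cn] := eqVneq (c i) 0.
  have -> : \prod_(j < k) sc i j = 0.
    by rewrite (bigD1 j0) //= /sc ci eqxx mul0r.
  rewrite mulr0; apply/esym/eqP; apply/prodf_eq0.
  move/eqP/prodf_eq0: ci => [j _ /eqP mj]; exists j => //.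
  by rewrite eq_le v0 andbT -mj.
have -> : \prod_(j < k) sc i j = 1.
  rewrite /sc (negbTE cn) big_split /= prodfV.
  rewrite [X in _ * X](bigD1 j0) // eqxx [X in _ * (_ * X)]big1 ?mulr1; last by move=> j /negbTE ->.
  by rewrite mulVf.
by rewrite mulr1.
Qed.
Lemma coord_le_frob (I : finType) (a : I -> R) x : `|a x| <= frob a.
Proof.
rewrite /frob -sqrtr_sqr ler_sqrt; last by apply: sumr_ge0 => *; apply: sqr_ge0.
by rewrite (bigD1 x) //= lerDl; apply: sumr_ge0 => *; apply: sqr_ge0.
Qed.

Lemma abs_le_sum (I : finType) (a : I -> R) x : `|a x| <= \sum_y `|a y|.
Proof. by rewrite (bigD1 x) //= lerDl; apply: sumr_ge0 => *. Qed.

Lemma minimizer (T : tindex P -> R) :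
  exists2 theta, Nle P r theta &
       forall theta', Nle P r theta' -> frob (T - theta) <= frob (T - theta').
Proof.
pose w00 : X := fun _ => 0.
pose M := \sum_x `|T x| + frob (T - Fm w00).
have M0 : 0 <= M by apply: addr_ge0; [apply: sumr_ge0 => * | apply: sqrtr_ge0].
pose K := Box (M + 1) `&` Mono.
have Kw00 : K w00.
  split; first by move=> s /=; rewrite in_itv /= lexx addr_ge0.
  by move=> a _.
pose g (w : X) := frob (T - Fm w).
have gc : continuous g.
  apply: (@frob_cont X _ (fun w => T - Fm w)) => x w.
  apply: (@continuousB R R^o X (fun _ => T x) (fun w => Fm w x)).
    exact: cst_continuous.
  exact: Fm_cont.
have [ws wsK wsmin] := @compact_EVT_min X R g K (ex_intro _ w00 Kw00) (K_compact (M + 1))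
   (continuous_subspaceT gc).
rewrite inE in wsK.
exists (Fm ws).
  apply: in_Nle; last by case: wsK.
  by move=> s; case: wsK => /(_ s) /=; rewrite in_itv /= => /andP[].
move=> th [v [vc ->]].
set th' := fun x => _.
have [le0|lt0] := leP (frob (T - Fm w00)) (frob (T - th')).
  apply: le_trans le0; apply: wsmin; rewrite inE; exact: Kw00.
have thM x : th' x <= M.
  have -> : th' x = T x - (T - th') x by rewrite /= opprB addrC subrK.
  apply: le_trans (ler_norm _) _; apply: le_trans (ler_normB _ _) _.
  apply: lerD; first exact: abs_le_sum.
  apply: le_trans (@coord_le_frob _ (T - th') x) _; exact: ltW.
have [w' [w'K w'E]] := @normalize M v M0 vc thM.
by rewrite /th' -w'E; apply: wsmin; rewrite inE.
Qed.
Lemma Nle_closed : closed (Nle P r : set {ptws tindex P -> R}).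
Proof.
move=> t tcl.
have [ths thsN thsmin] := minimizer t.
pose h (th : {ptws tindex P -> R}) := frob (t - th).
have hc : continuous h.
  apply: (@frob_cont {ptws tindex P -> R} _ (fun th => t - th)) => x th.
  apply: (@continuousB R R^o _ (fun _ => t x) (fun th : {ptws tindex P -> R} => th x)).
    exact: cst_continuous.
  exact: (@proj_continuous (tindex P) (fun _ => R)).
have ht : h t = 0 by rewrite /h /frob subrr big1 ?sqrtr0 // => x _; rewrite /= expr0n.
have c0 : frob (t - ths) = 0.
  apply/eqP; rewrite eq_le sqrtr_ge0 andbT; rewrite leNgt; apply/negP => cpos.
  have nb : nbhs t (h @^-1` ball (h t) (frob (t - ths))).
    exact: (hc t _ (nbhsx_ballx _ _ cpos)).
  have [th [thN thb]] := tcl _ nb.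
  move: thb; rewrite /= ht /ball /= sub0r normrN ger0_norm; last exact: sqrtr_ge0.
  by rewrite ltNge thsmin.
suff -> : t = ths by [].
apply/funext => x; apply/eqP; rewrite -subr_eq0 -sqrf_eq0.
have s0 : 0 <= \sum_i (t - ths) i ^+ 2 by apply: sumr_ge0 => i _; apply: sqr_ge0.
move/eqP: c0; rewrite sqrtr_eq0 => sle.
have /eqP s00 : \sum_i (t - ths) i ^+ 2 == 0 by rewrite eq_le sle s0.
by rewrite (psumr_eq0P (fun i _ => sqr_ge0 ((t - ths) i)) s00).
Qed.
End S.

Theorem theorem13 (R : realType) (k : nat) (d : 'I_k -> Order.disp_t)
  (P : forall j : 'I_k, finPOrderType (d j)) (r : nat) (hr : (1 <= r)%N) :
  closed (Nle P r : set {ptws tindex P -> R}) /\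
  (forall T : tindex P -> R,
     exists2 theta, Nle P r theta &
       forall theta', Nle P r theta' -> frob (T - theta) <= frob (T - theta')).
Proof.
split; first exact: Nle_closed.
exact: minimizer.
Qed.
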